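(* Let $M$ be an endo-AIP right $R$-module and $S=\mathrm{End}_R(M)$. If $S$ is a local ring, then $S$ is a prime ring.
   Context: For $N\le M$, $l_S(N)=\{\phi\in S:\phi(N)=0\}$. An ideal $I$ of $S$ is right s-unital if for every $a\in I$ there is $x\in I$ with $ax=a$. $M$ is endo-AIP if $l_S(N)$ is a right s-unital ideal of $S$ for every fully invariant submodule $N$ of $M$. *)

(* Defs.v *)
From HB Require Import structures.
From mathcomp Require Import all_boot all_order all_algebra.
Set Implicit Arguments. Unset Strict Implicit. Unset Printing Implicit Defensive.
Import GRing.Theory.
Local Open Scope ring_scope.

(* A right R-module is modelled as a left module over the converse ring R^c.
   S = End_R(M) is the type {linear M -> M} of R-linear endomorphisms, with
   ring addition pointwise and ring product  f * g := f \o g  (endomorphisms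
   act on the left of M).  Equality in S is extensional equality of maps. *)

Section EndoRing.
Variables (R : pzRingType) (M : lmodType R^c).

Definition Endo := {linear M -> M}.

Definition is_submodule (N : M -> Prop) : Prop :=
  [/\ N 0, (forall x y, N x -> N y -> N (x + y)) &
      (forall (r : R^c) x, N x -> N (r *: x))].

Definition fully_invariant (N : M -> Prop) : Prop :=
  forall (phi : Endo) x, N x -> N (phi x).

Definition lS (N : M -> Prop) : Endo -> Prop :=
  fun phi => forall x, N x -> phi x = 0.

Definition is_ideal (I : Endo -> Prop) : Prop :=
  [/\ (exists a, I a /\ forall x, a x = 0),
      (forall a b : Endo, I a -> I b -> forall c : Endo, (forall x, c x = a x + b x) -> I c),
      (forall a : Endo, I a -> forall c : Endo, (forall x, c x = - a x) -> I c),
      (forall (a s : Endo), I a -> forall c : Endo, (forall x, c x = s (a x)) -> I c) &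
      (forall (a s : Endo), I a -> forall c : Endo, (forall x, c x = a (s x)) -> I c)].

Definition is_right_ideal (I : Endo -> Prop) : Prop :=
  [/\ (exists a, I a /\ forall x, a x = 0),
      (forall a b : Endo, I a -> I b -> forall c : Endo, (forall x, c x = a x + b x) -> I c),
      (forall a : Endo, I a -> forall c : Endo, (forall x, c x = - a x) -> I c) &
      (forall (a s : Endo), I a -> forall c : Endo, (forall x, c x = a (s x)) -> I c)].

Definition right_s_unital_ideal (I : Endo -> Prop) : Prop :=
  is_ideal I /\ forall a, I a -> exists2 x : Endo, I x & forall m, a (x m) = a m.

Definition endo_AIP : Prop :=
  forall N : M -> Prop, is_submodule N -> fully_invariant N ->
    right_s_unital_ideal (lS N).

Definition maximal_right_ideal (I : Endo -> Prop) : Prop :=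
  [/\ is_right_ideal I, (exists a : Endo, ~ I a) &
      forall J : Endo -> Prop, is_right_ideal J -> (forall a, I a -> J a) ->
        (forall a, J a <-> I a) \/ (forall a, J a)].

Definition local_End : Prop :=
  exists2 I : Endo -> Prop, maximal_right_ideal I &
    forall J, maximal_right_ideal J -> forall a, J a <-> I a.

Definition prime_End : Prop :=
  forall a b : Endo, (forall (s : Endo) x, a (s (b x)) = 0) ->
    (forall x, a x = 0) \/ (forall x, b x = 0).

End EndoRing.

(* Main.v *)
Require Import Defs.
From mathcomp Require Import all_boot all_order all_algebra.
From mathcomp Require Import boolp classical_sets.
Set Implicit Arguments. Unset Strict Implicit. Unset Printing Implicit Defensive.
Import GRing.Theory.
Local Open Scope ring_scope.

Section Proof.
Variables (R : pzRingType) (M : lmodType R^c).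

Definition Kx (x : Endo M) : Endo M -> Prop :=
  fun c => exists s : Endo M, forall m, c m = x (s m).

Lemma Kx_ri x : is_right_ideal (Kx x).
Proof.
split.
- exists \0; split => [|m] //; exists \0 => m /=; by rewrite linear0.
- move=> a b [s1 H1] [s2 H2] c Hc; exists (s1 \+ s2) => m.
  by rewrite Hc H1 H2 /= linearD.
- move=> a [s1 H1] c Hc; exists (\- s1) => m.
  by rewrite Hc H1 /= linearN.
- move=> a t [s1 H1] c Hc; exists (s1 \o t)%FUN => m.
  by rewrite Hc H1.
Qed.

Lemma ri_full (J : Endo M -> Prop) : is_right_ideal J -> J idfun -> forall a, J a.
Proof. by case=> _ _ _ Hm Hid a; apply: (Hm _ a Hid). Qed.

Record pri (x : Endo M) := Pri {
  pset :> Endo M -> Prop;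
  pri_ri : is_right_ideal pset;
  pri_prop : ~ pset idfun;
  pri_K : forall c, Kx x c -> pset c }.

Lemma exists_max x : ~ Kx x idfun -> exists J, maximal_right_ideal J /\ J x.
Proof.
move=> nK.
pose t0 := @Pri x (Kx x) (Kx_ri x) nK (fun c h => h).
pose Rl := fun A B : pri x => `[< forall c, A c -> B c >].
have [t Ht] : exists t, premaximal Rl t.
  apply: (@ZL_preorder (pri x) t0 Rl).
  - by move=> t; apply/asboolP.
  - by move=> r s t /asboolP H1 /asboolP H2; apply/asboolP => c /H1 /H2.
  move=> A Atot.
  have [[t1 At1]|nA] := pselect (exists t, A t); last first.
    by exists t0 => s As; exfalso; apply: nA; exists s.
  pose U := fun c => exists t, A t /\ pset t c.
  have comb : forall a b, U a -> U b -> exists t, A t /\ t a /\ t b.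
    move=> a b [ta [Ata ha]] [tb [Atb hb]].
    case: (Atot _ _ Ata Atb) => /asboolP H.
    + by exists tb; split => //; split => //; apply: H.
    + by exists ta; split => //; split => //; apply: H.
  have Uri : is_right_ideal U.
    split.
    - case: (pri_ri t1) => [[z [Hz z0]] _ _ _].
      by exists z; split => //; exists t1.
    - move=> a b Ua Ub c Hc; have [t [At [ta tb]]] := comb _ _ Ua Ub.
      exists t; split => //; case: (pri_ri t) => _ Hadd _ _; exact: Hadd ta tb c Hc.
    - move=> a [t [At ta]] c Hc; exists t; split => //.
      case: (pri_ri t) => _ _ Hn _; exact: Hn ta c Hc.
    - move=> a s [t [At ta]] c Hc; exists t; split => //.
      case: (pri_ri t) => _ _ _ Hm; exact: Hm a s ta c Hc.
  have Unp : ~ U idfun by case=> t [_ /pri_prop].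
  have UK : forall c, Kx x c -> U c by move=> c Kc; exists t1; split => //; apply: pri_K.
  exists (Pri Uri Unp UK) => s As; apply/asboolP => c sc /=; by exists s.
exists (pset t); split; last by apply: pri_K; exists idfun.
split; first exact: pri_ri.
  by exists idfun; apply: pri_prop.
move=> J Jri tJ.
have [Jid|nJ] := pselect (J idfun); first by right; apply: ri_full.
left; pose tJ' := Pri Jri nJ (fun c h => tJ c (pri_K t h)).
have /asboolP H := Ht tJ' (asboolT tJ).
by move=> a; split => [/H|/tJ].
Qed.

Lemma key (I : Endo M -> Prop) :
  maximal_right_ideal I -> (forall J, maximal_right_ideal J -> forall a, J a <-> I a) ->
  forall x : Endo M, (exists t : Endo M, forall m, x (t m) = m) \/ I x.
Proof.
move=> HI Huniq x.
have [[s Hs]|nK] := pselect (Kx x idfun).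
  by left; exists s => m; rewrite -Hs.
right; have [J [HJ Jx]] := exists_max nK.
by apply/(Huniq J HJ).
Qed.

End Proof.

Theorem proposition3p9 (R : pzRingType) (M : lmodType R^c) :
  endo_AIP M -> local_End M -> prime_End M.
Proof.
move=> Haip [I HI Huniq] a b Hab.
pose N := fun y : M => forall s : Endo M, a (s y) = 0.
have Nsub : is_submodule N.
  split.
  - by move=> s; rewrite !linear0.
  - by move=> y z Hy Hz s; rewrite !linearD /= Hy Hz addr0.
  - by move=> r y Hy s; rewrite !linearZ /= Hy scaler0.
have Nfi : fully_invariant N.
  by move=> phi y Hy s; apply: (Hy (s \o phi)%FUN).
have [_ Hs] := Haip N Nsub Nfi.
have aN : lS N a by move=> y Hy; apply: (Hy idfun).
have [x xN Hx] := Hs a aN.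
have Iprop : ~ I idfun.
  case: HI => Iri [z nz] _ Iid; apply: nz; exact: ri_full.
have [[t Ht]|Ix] := key HI Huniq x.
  right => m; rewrite -(Ht (b m)); apply: xN => s.
  exact: (Hab (s \o t)%FUN).
have [[t Ht]|Ix'] := key HI Huniq (idfun \- x); last first.
  exfalso; apply: Iprop; case: HI => [[_ Hadd _ _] _ _].
  apply: (Hadd _ _ Ix Ix') => m /=; by rewrite addrC subrK.
left => m; rewrite -(Ht m) /= linearB /= Hx subrr //.
Qed.
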